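(* In the algorithm DMA, the infeasible merged schedule produced in Step 3 has length at most $(\mu+1/\beta)\Delta$.
   Context: Model. $m$ servers, each a sender and a receiver. A coflow is an $m\times m$ nonnegative integer matrix $(d_{sr})$ of unit packets from sender $s$ to receiver $r$. Each job $j\in\mathcal{N}$ has $\mu_j$ coflows $\mathcal{D}^{(cj)}$ and a DAG $G_j$ (edge $c_1\to c_2$: $c_2$ may not start before $c_1$ finishes). Each slot, each sender sends at most one and each receiver receives at most one packet. $\mu=\max_j\mu_j$. Effective size of a coflow: $D=\max\{\max_s\sum_rd_{sr},\max_r\sum_sd_{sr}\}$; $\Delta$ is the effective size of $\sum_j\sum_c\mathcal{D}^{(cj)}$. BNA: polynomial-time procedure scheduling all packets of a coflow of effective size $D$ feasibly in $D$ consecutive slots. Algorithm DMA (constant $\beta>1/e$): Step 1: for each job, schedule its coflows one after another in a topological order of $G_j$, each with BNA, starting at time $0$ (isolated schedule). Step 2: delay each job's isolated schedule by an independent uniformly random integer in $[0,\Delta/\beta]$. Step 3: merge the delayed schedules slot by slot (capacity constraints may be violated). Step 4: replace each slot $t$ by $\alpha_t$ slots in which its packets are scheduled feasibly by BNA, where $\alpha_t\ge1$ is the maximum number of packets any server sends or receives in slot $t$. *)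

(* Defs.v *)
From HB Require Import structures.
From mathcomp Require Import all_boot all_order all_algebra.
From mathcomp Require Import reals sequences exp.
Set Implicit Arguments. Unset Strict Implicit. Unset Printing Implicit Defensive.
Import Order.TTheory GRing.Theory Num.Theory.

(* A coflow / a slot content on m servers: an m x m matrix of packet counts,
   entry (s, r) = packets from sender s to receiver r. *)
Notation coflow m := 'M[nat]_m.

Definition eff_size m (D : coflow m) : nat :=
  maxn (\max_(s < m) \sum_(r < m) D s r) (\max_(r < m) \sum_(s < m) D s r).

Definition schedule m := seq (coflow m).

Definition feasible_slot m (P : coflow m) : bool :=
  [forall s : 'I_m, \sum_(r < m) P s r <= 1] &&
  [forall r : 'I_m, \sum_(s < m) P s r <= 1].

Definition sched_total m (S : schedule m) : coflow m :=
  (\sum_(P <- S) P)%R.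

Definition is_BNA m (bna : coflow m -> schedule m) : Prop :=
  forall D : coflow m,
    [/\ size (bna D) = eff_size D,
        all (@feasible_slot m) (bna D) &
        sched_total (bna D) = D].

Definition topo_order (mu : nat) (G : rel nat) (ord : seq nat) : Prop :=
  [/\ perm_eq ord (iota 0 mu) &
      forall c1 c2, c1 < mu -> c2 < mu -> G c1 c2 -> index c1 ord < index c2 ord].

Definition isolated m (bna : coflow m -> schedule m)
  (coflows : nat -> coflow m) (ord : seq nat) : schedule m :=
  flatten [seq bna (coflows c) | c <- ord].

Definition delayed m (d : nat) (S : schedule m) : schedule m :=
  nseq d 0%R ++ S.

(* Step 3: merge the schedules slot by slot (capacity may be violated). *)
Definition merge_sched m (N : nat) (S : 'I_N -> schedule m) : schedule m :=
  mkseq (fun t => (\sum_(j < N) nth 0%R (S j) t)%R) (\max_(j < N) size (S j)).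

Definition total_demand m N (mu : 'I_N -> nat) (D : 'I_N -> nat -> coflow m)
  : coflow m := (\sum_(j < N) \sum_(c < mu j) D j c)%R.

(* Main.v *)
Require Import Defs.
From HB Require Import structures.
From mathcomp Require Import all_boot all_order all_algebra.
From mathcomp Require Import reals sequences exp.
Import Order.TTheory GRing.Theory Num.Theory.

Lemma eff_size_addr m (A X : coflow m) : (eff_size A <= eff_size (A + X)%R)%N.
Proof.
rewrite /eff_size geq_max !leq_max; apply/andP; split; apply/orP.
- left; apply/bigmax_leqP => s _; apply: (leq_trans _ (leq_bigmax s)).
  by apply: leq_sum => r _; rewrite mxE leq_addr.
- right; apply/bigmax_leqP => r _; apply: (leq_trans _ (leq_bigmax r)).
  by apply: leq_sum => s _; rewrite mxE leq_addr.
Qed.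

Lemma sumn_map_le (T : eqType) (s : seq T) (f : T -> nat) K :
  (forall x, x \in s -> f x <= K)%N -> (sumn (map f s) <= size s * K)%N.
Proof.
elim: s => //= a s IH H; rewrite mulSn leq_add //.
  by apply: H; rewrite inE eqxx.
by apply: IH => x hx; apply: H; rewrite inE hx orbT.
Qed.

Theorem lemma3 (R : realType) (m N : nat) (mu : 'I_N -> nat)
  (D : 'I_N -> nat -> coflow m) (G : 'I_N -> rel nat)
  (ord : 'I_N -> seq nat) (bna : coflow m -> schedule m) (beta : R)
  (delay : 'I_N -> nat) :
  is_BNA bna ->
  (forall j, topo_order (mu j) (G j) (ord j)) ->
  ((expR 1)^-1 < beta)%R ->
  (forall j, ((delay j)%:R <= (eff_size (total_demand mu D))%:R / beta)%R) ->
  ((size (merge_sched (fun j => delayed (delay j) (isolated bna (D j) (ord j)))))%:R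
     <= ((\max_(j < N) mu j)%:R + beta^-1) * (eff_size (total_demand mu D))%:R)%R.
Proof.
move=> hB htopo hbeta hdel.
have bpos : (0 < beta)%R.
  by apply: lt_trans hbeta; rewrite invr_gt0 expR_gt0.
set Dl := eff_size (total_demand mu D).
have hc : forall j c, (c < mu j)%N -> (eff_size (D j c) <= Dl)%N.
  move=> j c hcj; rewrite /Dl /total_demand (bigD1 j) //= (bigD1 (Ordinal hcj)) //=.
  by rewrite -addrA; apply: eff_size_addr.
have hiso : forall j, (size (isolated bna (D j) (ord j)) <= mu j * Dl)%N.
  move=> j; rewrite /isolated size_flatten /shape -map_comp.
  have [hp _] := htopo j.
  have -> : mu j = size (ord j) by rewrite (perm_size hp) size_iota.
  apply: sumn_map_le => c hcin /=.
  have [->] := hB (D j c).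
  have := hcin; rewrite (perm_mem hp) mem_iota add0n => /andP[_ hh].
  by move=> _ _; apply: hc.
rewrite /merge_sched size_mkseq.
set x := (_ * _)%R.
have x0 : (0 <= x)%R by rewrite /x mulr_ge0 // addr_ge0 // ltW // invr_gt0.
elim/big_ind: _ => //.
  move=> a b ha hb; case: (leqP a b) => hab.
    by [].
  by [].
move=> j _; rewrite /delayed size_cat size_nseq natrD.
rewrite /x mulrDl [X in (_ <= X)%R]addrC; apply: lerD; first by rewrite mulrC; exact: hdel.
rewrite -natrM ler_nat; apply: (leq_trans (hiso j)).
by apply: leq_mul => //; apply: (leq_bigmax j).
Qed.
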